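(* Let $G$ be a simple undirected graph on vertex set $[n]$ and let $I_H\subseteq[n]$ be a vertex set whose induced subgraph $H=G[I_H]$ is triangle-free. Then for every $X\in\operatorname{R}_1[\mathcal{M}_n^+(G)]$, the comparison matrix of the principal submatrix satisfies $M(X[I_H])\ge 0$.
   Context: $\mathcal{M}_n^+(G)$ is the cone of $n\times n$ complex PSD matrices $X$ with $X_{ij}=0$ whenever $i\neq j$ and $\{i,j\}$ is not an edge of $G$. For a cone $\mathcal{C}\subseteq\mathcal{M}_n^+$, $\operatorname{R}_1[\mathcal{C}]$ is the convex cone generated by the rank-1 matrices in $\mathcal{C}$. $X[I]$ denotes the principal submatrix with rows and columns in $I$. The comparison matrix $M(Y)$ of a square matrix $Y$ is defined by $M(Y)_{ii}=|Y_{ii}|$ and $M(Y)_{ij}=-|Y_{ij}|$ for $i\ne j$. A graph is triangle-free if it contains no 3-cycle. *)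

(* Defs.v *)
(* Complex numbers are R[i] for a real closed field R
   (in particular R : realType gives the usual complex numbers). *)
From HB Require Import structures.
From mathcomp Require Import all_boot all_order all_algebra.
From mathcomp Require Import complex.
Set Implicit Arguments. Unset Strict Implicit. Unset Printing Implicit Defensive.
Import Order.TTheory GRing.Theory Num.Theory.
Local Open Scope ring_scope.

Section Defs.
Variable C : numClosedFieldType.

Definition adjmx {m n : nat} (A : 'M[C]_(m, n)) : 'M[C]_(n, m) :=
  (map_mx Num.conj A)^T.

Definition psd {n : nat} (X : 'M[C]_n) : Prop :=
  adjmx X = X /\ forall v : 'cV[C]_n, 0 <= (adjmx v *m X *m v) 0 0.

Definition simple_graph {n : nat} (adj : rel 'I_n) : Prop :=
  symmetric adj /\ irreflexive adj.

Definition Mplus {n : nat} (adj : rel 'I_n) (X : 'M[C]_n) : Prop :=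
  psd X /\ forall i j : 'I_n, i != j -> ~~ adj i j -> X i j = 0.

Definition R1Mplus {n : nat} (adj : rel 'I_n) (X : 'M[C]_n) : Prop :=
  exists (m : nat) (c : 'I_m -> C) (Y : 'I_m -> 'M[C]_n),
    [/\ forall k, 0 <= c k,
        forall k, Mplus adj (Y k) /\ \rank (Y k) = 1%N
      & X = \sum_(k < m) c k *: Y k].

(* principal submatrix X[I] (rows/columns of I in increasing order) *)
Definition principal_submx {n : nat} (X : 'M[C]_n) (I : {set 'I_n}) :
  'M[C]_#|I| :=
  \matrix_(i < #|I|, j < #|I|) X (enum_val i) (enum_val j).

Definition comparison_mx {n : nat} (Y : 'M[C]_n) : 'M[C]_n :=
  \matrix_(i, j) (if i == j then `|Y i j| else - `|Y i j|).

End Defs.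

Definition triangle_free_on {n : nat} (adj : rel 'I_n) (I : {set 'I_n}) : Prop :=
  forall i j k : 'I_n, i \in I -> j \in I -> k \in I ->
    ~ [&& adj i j, adj j k & adj i k].

(* Main.v *)
Require Import Defs.
From HB Require Import structures.
From mathcomp Require Import all_boot all_order all_algebra.
From mathcomp Require Import complex reals.
From mathcomp Require Import ring.
Import Order.TTheory GRing.Theory Num.Theory.
Local Open Scope ring_scope.

Module Helpers.
Set Implicit Arguments. Unset Strict Implicit.

Section Core.
Variable C : numClosedFieldType.

Lemma widen_inj m : injective (widen_ord (leqnSn m)).
Proof. by move=> a b H; apply: val_inj; exact: (congr1 val H). Qed.

Lemma sq_sum_pair0 m (q : 'I_m -> C) :
  (forall i j, i != j -> q i * q j = 0) ->
  (\sum_i q i) ^+ 2 = \sum_i q i ^+ 2.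
Proof.
elim: m q => [|m IH] q Hq; first by rewrite !big_ord0 expr0n.
have H0 : (\sum_(i < m) q (widen_ord (leqnSn m) i)) * q ord_max = 0.
  rewrite mulr_suml big1 // => i _; apply: Hq.
  by rewrite -val_eqE /= neq_ltn ltn_ord.
rewrite !big_ord_recr /= sqrrD H0 mul0rn addr0 IH //.
by move=> i j Hij; apply: Hq; rewrite (inj_eq (@widen_inj _)).
Qed.

Lemma core m (q : 'I_m -> C) :
  (forall i, 0 <= q i) ->
  (forall i j l, i != j -> j != l -> i != l -> q i * q j * q l = 0) ->
  (\sum_i q i) ^+ 2 <= 2 * \sum_i q i ^+ 2.
Proof.
elim: m q => [|m IH] q Hp Hq; first by rewrite !big_ord0 expr0n mulr0.
rewrite !big_ord_recr /=.
set S := \sum_(i < m) _; set P := \sum_(i < m) _.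
have HS : 0 <= S by apply: sumr_ge0.
have Hx := Hp ord_max.
have [x0|xn0] := eqVneq (q ord_max) 0.
  rewrite x0 addr0 expr0n addr0; apply: IH => // i j l Hij Hjl Hil.
  by apply: Hq; rewrite (inj_eq (@widen_inj _)).
have HSP : S ^+ 2 = P.
  apply: sq_sum_pair0 => i j Hij.
  have := Hq (widen_ord (leqnSn m) i) (widen_ord (leqnSn m) j) ord_max.
  rewrite (inj_eq (@widen_inj _)) Hij -!val_eqE /= !neq_ltn !ltn_ord.
  move=> /(_ isT isT isT) /eqP; rewrite mulf_eq0 (negPf xn0) orbF => /eqP //.
rewrite -HSP -subr_ge0.
have -> : 2 * (S ^+ 2 + q ord_max ^+ 2) - (S + q ord_max) ^+ 2 = (S - q ord_max) ^+ 2 by ring.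
apply: real_exprn_even_ge0 => //.
by apply: realB; apply: ger0_real.
Qed.
End Core.

Section Perk.
Variable C : numClosedFieldType.

Lemma perk m (Z : 'M[C]_m) (u : 'I_m -> C) :
 (forall i, 0 <= u i) ->
 (forall i j, `|Z i j| = sqrtC (Z i i) * sqrtC (Z j j)) ->
 (forall i j l, i != j -> j != l -> i != l -> Z i j = 0 \/ Z j l = 0 \/ Z i l = 0) ->
 0 <= \sum_i \sum_j (if i == j then `|Z i j| else - `|Z i j|) * u i * u j.
Proof.
move=> Hu Hn Ht.
set q := fun i => sqrtC (Z i i) * u i.
have Hq : forall i, 0 <= q i.
  move=> i; apply: mulr_ge0 => //; rewrite sqrtC_ge0.
  by rewrite -[X in 0 <= X]sqrtCK expr2 -Hn normr_ge0.
have E : forall i j, (if i == j then `|Z i j| else - `|Z i j|) * u i * u j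
   = (if i == j then 2 * (q i * q j) else 0) - q i * q j.
  move=> i j; rewrite /q Hn; case: eqP => _; ring.
under eq_bigr do under eq_bigr do rewrite E.
have -> : \sum_i \sum_j ((if i == j then 2 * (q i * q j) else 0) - q i * q j)
   = 2 * \sum_i q i ^+ 2 - (\sum_i q i) ^+ 2.
  rewrite expr2 mulr_suml mulr_sumr -sumrB; apply: eq_bigr => i _.
  rewrite sumrB mulr_sumr; congr (_ - _).
  rewrite (bigD1 i) //= eqxx big1 ?addr0 ?expr2 // => j Hj; by rewrite eq_sym (negPf Hj).

rewrite subr_ge0; apply: core => // i j l Hij Hjl Hil.
have H0 : forall a b, Z a b = 0 -> q a = 0 \/ q b = 0.
  move=> a b /(congr1 (fun x => `|x|)); rewrite Hn normr0 => /eqP.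
  rewrite mulf_eq0 !sqrtC_eq0 => /orP [] /eqP H; [left|right];
  by rewrite /q H sqrtC0 mul0r.
have [H|[H|H]] := Ht i j l Hij Hjl Hil; case: (H0 _ _ H) => ->;
  by rewrite ?mulr0 ?mul0r.
Qed.
End Perk.

Section Abs.
Variable C : numClosedFieldType.

Lemma qform m (M : 'M[C]_m) (v : 'cV[C]_m) :
  (adjmx v *m M *m v) 0 0 = \sum_i \sum_j (v i 0)^* * M i j * v j 0.
Proof.
rewrite mxE exchange_big /=; apply: eq_bigr => j _.
rewrite mxE mulr_suml; apply: eq_bigr => i _.
by rewrite /adjmx !mxE.
Qed.

Lemma twoRe (w : C) : w + w^* <= 2 * `|w|.
Proof.
have := (leif_Re_Creal w).1; rewrite ReE => H.
have -> : w + w^* = 2 * ((w + w^*) / 2) by field.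
by rewrite ler_wpM2l.
Qed.

Lemma abstract m K (c : 'I_K -> C) (Zk : 'I_K -> 'M[C]_m) (Z : 'M[C]_m) :
 (forall k, 0 <= c k) ->
 (forall i j, Z i j = \sum_k c k * Zk k i j) ->
 (forall k i j, Zk k j i = (Zk k i j)^*) ->
 (forall k i j, `|Zk k i j| = sqrtC (Zk k i i) * sqrtC (Zk k j j)) ->
 (forall k i j l, i != j -> j != l -> i != l ->
     Zk k i j = 0 \/ Zk k j l = 0 \/ Zk k i l = 0) ->
 psd (comparison_mx Z).
Proof.
move=> Hc HZ Hh Hn Ht.
have Hd : forall k i, 0 <= Zk k i i.
  by move=> k i; rewrite -[X in 0 <= X]sqrtCK expr2 -Hn normr_ge0.
have Hcr : forall k, (c k)^* = c k by move=> k; rewrite geC0_conj.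
have Zs : forall i j, Z j i = (Z i j)^*.
  move=> i j; rewrite !HZ rmorph_sum; apply: eq_bigr => k _.
  by rewrite rmorphM Hh; congr (_ * _); exact/esym/Hcr.
have Ns : forall i j, `|Z j i| = `|Z i j| by move=> i j; rewrite Zs norm_conjC.
set Mc := comparison_mx Z.
have McE : forall i j, Mc i j = if i == j then `|Z i j| else - `|Z i j|.
  by move=> i j; rewrite /Mc mxE.
have Mcs : forall i j, Mc j i = Mc i j.
  by move=> i j; rewrite !McE eq_sym Ns.
have Mcr : forall i j, (Mc i j)^* = Mc i j.
  move=> i j; rewrite McE; case: eqP => _; first exact: geC0_conj (normr_ge0 _).
  by rewrite rmorphN; congr (- _); exact: geC0_conj (normr_ge0 _).
split.
  by apply/matrixP => i j; rewrite /adjmx !mxE -!McE Mcr Mcs.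
move=> v; rewrite qform.
set u : 'I_m -> C := fun i => `|v i 0|.
have -> : \sum_i \sum_j (v i 0)^* * Mc i j * v j 0 =
   \sum_i \sum_j Mc i j * u i * u j +
   \sum_i \sum_j Mc i j * ((v i 0)^* * v j 0 - u i * u j).
  rewrite -big_split; apply: eq_bigr => i _.
  rewrite -big_split; apply: eq_bigr => j _ /=; ring.
apply: addr_ge0.
  have Hu : forall i, 0 <= u i by move=> i; apply: normr_ge0.
  have Q := fun k => @perk C m (Zk k) u Hu (Hn k) (Ht k).
  have L : 0 <= \sum_k c k * \sum_i \sum_j
     (if i == j then `|Zk k i j| else - `|Zk k i j|) * u i * u j.
    by apply: sumr_ge0 => k _; apply: mulr_ge0.
  apply: le_trans L _.
  under eq_bigr do rewrite mulr_sumr; rewrite exchange_big /=.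
  apply: ler_sum => i _.
  under eq_bigr do rewrite mulr_sumr; rewrite exchange_big /=.
  apply: ler_sum => j _.
  under eq_bigr do rewrite !mulrA.
  rewrite -mulr_suml -mulr_suml.
  apply: ler_wpM2r => //; apply: ler_wpM2r => //.
  rewrite McE; case: eqP => [<-|_].
    rewrite HZ ger0_norm; last by apply: sumr_ge0 => k _; apply: mulr_ge0.
    by apply: ler_sum => k _; rewrite ger0_norm.
  under eq_bigr do rewrite mulrN; rewrite sumrN lerN2 HZ.
  apply: le_trans (ler_norm_sum _ _ _) _.
  by apply: ler_sum => k _; rewrite normrM (ger0_norm (Hc k)).
set b := fun i j => Mc i j * ((v i 0)^* * v j 0 - u i * u j).
rewrite -[X in 0 <= X]/(\sum_i \sum_j b i j).
rewrite -(@pmulr_rge0 _ 2) // mulr2n mulrDl mul1r.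
rewrite [X in _ + X]exchange_big /= -big_split /=.
apply: sumr_ge0 => i _; rewrite -big_split /=; apply: sumr_ge0 => j _.
rewrite /b Mcs -mulrDr.
have [<-|nij] := eqVneq i j.
  by rewrite /u -normCKC expr2 !subrr addr0 mulr0.
rewrite McE eq_sym (negPf nij); apply: mulr_le0; first by rewrite oppr_le0.
have := twoRe ((v i 0)^* * v j 0).
have wc : ((v i 0)^* * v j 0)^* = (v j 0)^* * v i 0.
  by rewrite rmorphM /= conjCK mulrC.
rewrite wc normrM norm_conjC -/(u i) -/(u j).
move=> H; rewrite addrACA -opprD subr_le0 (mulrC (u j)).
by rewrite -mulr2n -mulr_natl.
Qed.
End Abs.

Lemma rank1_minor (F : fieldType) n (Y : 'M[F]_n) : \rank Y = 1%N ->
  forall i j, Y i j * Y j i = Y i i * Y j j.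
Proof.
move=> hr i j.
move: (col_base Y) (row_base Y) (mulmx_base Y); rewrite hr => cb rb <-.
rewrite !mxE !big_ord1; ring.
Qed.

Section Conc.
Variable C : numClosedFieldType.

Lemma herm_entry n (Y : 'M[C]_n) : adjmx Y = Y -> forall i j, Y j i = (Y i j)^*.
Proof. by move=> H i j; rewrite -{1}H /adjmx !mxE. Qed.

Lemma psd_diag n (Y : 'M[C]_n) : psd Y -> forall i, 0 <= Y i i.
Proof.
move=> [_ H] i; have := H (\col_a (a == i)%:R); rewrite qform.
rewrite (bigD1 i) //= [X in _ + X]big1 ?addr0; last first.
  by move=> a /negPf na; rewrite big1 // => b _; rewrite mxE na rmorph0 !mul0r.
rewrite (bigD1 i) //= [X in _ + X]big1 ?addr0; last first.
  by move=> b /negPf nb; rewrite !mxE nb mulr0.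
by rewrite !mxE eqxx rmorph1 mul1r mulr1.
Qed.

Lemma norm_entry n (Y : 'M[C]_n) : psd Y -> \rank Y = 1%N ->
  forall i j, `|Y i j| = sqrtC (Y i i) * sqrtC (Y j j).
Proof.
move=> Hp Hr i j.
have Hd := psd_diag Hp.
apply/eqP; rewrite -(@eqrXn2 _ 2) //; last by apply: mulr_ge0; rewrite sqrtC_ge0.
rewrite normCK -(herm_entry Hp.1) rank1_minor // exprMn !sqrtCK //.
Qed.
End Conc.

End Helpers.
Import Helpers.

Theorem mainTheorem6 (R : realType) (n : nat) (adj : rel 'I_n)
  (IH : {set 'I_n}) (X : 'M[R[i]]_n) :
  simple_graph adj ->
  triangle_free_on adj IH ->
  R1Mplus adj X ->
  psd (comparison_mx (principal_submx X IH)).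
Proof.
move=> [Hsym Hirr] Htf [K [c [Y [Hc HY ->]]]].
apply: (@abstract _ _ K c (fun k => principal_submx (Y k) IH)).
- exact: Hc.
- move=> i j; rewrite /principal_submx mxE summxE; apply: eq_bigr => k _.
  by rewrite !mxE.
- move=> k i j; rewrite !mxE. exact: (herm_entry (HY k).1.1.1 (enum_val i) (enum_val j)).
- by move=> k i j; rewrite !mxE; apply: norm_entry; [exact: (HY k).1.1 | exact: (HY k).2].
move=> k i j l nij njl nil; rewrite !mxE.
have Hadj : forall a b : 'I_n, a != b -> Y k a b != 0 -> adj a b.
  move=> a b nab; case E: (adj a b) => //; rewrite (HY k).1.2 ?E ?eqxx //.
have ninj : forall x y : 'I_#|IH|, x != y -> enum_val x != enum_val y.
  by move=> x y; apply: contra => /eqP /enum_val_inj ->.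
have [H1|H1] := eqVneq (Y k (enum_val i) (enum_val j)) 0; first by left.
have [H2|H2] := eqVneq (Y k (enum_val j) (enum_val l)) 0; first by right; left.
have [H3|H3] := eqVneq (Y k (enum_val i) (enum_val l)) 0; first by right; right.
exfalso; apply: (Htf (enum_val i) (enum_val j) (enum_val l)); rewrite ?enum_valP //.
by rewrite !Hadj ?ninj.
Qed.
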